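(* Let $A$ be a cyclic Leibniz algebra generated by $a$, with $p(x)$ as in the context. Then $\Phi(A)=0$ if and only if $p(x)$ is a product of distinct irreducible factors (i.e. $n_1=\cdots=n_s=1$).
   Context: A (left) Leibniz algebra is an algebra satisfying $x(yz)=(xy)z+y(xz)$ for all $x,y,z$; all algebras are finite-dimensional over a field $F$. $A$ is a cyclic Leibniz algebra generated by $a$: $A$ is generated as an algebra by the single element $a$, and with $a^1=a$, $a^{k+1}=aa^k$, the elements $a,a^2,\dots,a^n$ form a basis of $A$. Write $aa^n=\alpha_2a^2+\cdots+\alpha_na^n$. $L_a:A\to A$ is $b\mapsto ab$, with characteristic (and minimal) polynomial $p(x)=x^n-\alpha_nx^{n-1}-\cdots-\alpha_2x=p_1(x)^{n_1}\cdots p_s(x)^{n_s}$, the $p_j$ distinct monic irreducibles over $F$, $p_1(x)=x$. $\Phi(A)$ is the intersection of all maximal subalgebras of $A$. *)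

(* Defs.v *)
From HB Require Import structures.
From mathcomp Require Import all_boot all_order all_algebra.
Set Implicit Arguments. Unset Strict Implicit. Unset Printing Implicit Defensive.
Import GRing.Theory.
Local Open Scope ring_scope.

(* An n-dimensional algebra over F is modelled on 'rV[F]_n with a
   multiplication mul (assumed bilinear in the theorem). *)
Section Leib.
Variables (F : fieldType) (n : nat) (mul : 'rV[F]_n -> 'rV[F]_n -> 'rV[F]_n).

Definition bilinear_mul : Prop :=
  (forall x, linear (mul x)) /\ (forall y, linear (fun x => mul x y)).

Definition left_leibniz : Prop :=
  forall x y z, mul x (mul y z) = mul (mul x y) z + mul y (mul x z).

(* lpow a k = a^(k+1), with a^1 = a and a^(k+1) = a a^k *)
Fixpoint lpow (a : 'rV[F]_n) (k : nat) : 'rV[F]_n :=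
  if k is k'.+1 then mul a (lpow a k') else a.

Definition cyclic_basis (a : 'rV[F]_n) : Prop :=
  basis_of fullv (mkseq (lpow a) n).

Definition is_subalgebra (U : {vspace 'rV[F]_n}) : Prop :=
  forall x y, x \in U -> y \in U -> mul x y \in U.

Definition is_maximal_subalgebra (M : {vspace 'rV[F]_n}) : Prop :=
  [/\ is_subalgebra M, M != fullv%VS &
      forall U : {vspace 'rV[F]_n}, is_subalgebra U -> (M <= U)%VS ->
        U != fullv%VS -> U = M].

Definition in_frattini (x : 'rV[F]_n) : Prop :=
  forall M, is_maximal_subalgebra M -> x \in M.

Definition frattini_trivial : Prop := forall x, in_frattini x -> x = 0.

(* matrix of the left multiplication L_a : b |-> a b (row-vector convention) *)
Definition Lmx (a : 'rV[F]_n) : 'M[F]_n := lin1_mx (mul a).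

End Leib.

(* Main.v *)
Require Import Defs.
From HB Require Import structures.
From mathcomp Require Import all_boot all_order all_algebra.
From Stdlib Require Import Classical.
Set Implicit Arguments. Unset Strict Implicit. Unset Printing Implicit Defensive.
Import GRing.Theory.
Local Open Scope ring_scope.

Section PolyAux.
Variable F : fieldType.
Implicit Types p q f g : {poly F}.

Lemma irr_prime q f g : irreducible_poly q -> q %| f * g -> (q %| f) \/ (q %| g).
Proof.
move=> irr H.
have [Hs|Hs] := eqVneq (size (gcdp q f)) 1%N.
  right; by rewrite -(@Gauss_dvdpr _ _ f) // /coprimep Hs.
left; have E := irr _ Hs (dvdp_gcdl q f).
by rewrite -(eqp_dvdl _ E) dvdp_gcdr.
Qed.

Lemma minsize (P : {poly F} -> Prop) d0 : P d0 ->
  exists d, P d /\ forall e, P e -> (size d <= size e)%N.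
Proof.
move: {2}(size d0) (leqnn (size d0)) => k.
elim: k d0 => [|k IH] d Hs Pd.
  exists d; split => // e _; move: Hs; rewrite leqn0 => /eqP ->; exact: leq0n.
case: (classic (exists e, P e /\ (size e < size d)%N)) => [[e [Pe He]]|N].
  apply: (IH e) => //; rewrite -ltnS; exact: leq_trans He Hs.
exists d; split => // e Pe; rewrite leqNgt; apply/negP => He; apply: N; by exists e.
Qed.

Lemma irr_factor (d : {poly F}) : (1 < size d)%N -> exists q, irreducible_poly q /\ q %| d.
Proof.
move: {2}(size d) (leqnn (size d)) => k.
elim: k d => [|k IH] d Hs Hd; first by move: (leq_trans Hd Hs).
case: (classic (irreducible_poly d)) => [I|NI]; first by exists d; split => //; exact: dvdpp.
have [e [He1 [Hed Hne]]] : exists e : {poly F}, size e != 1%N /\ e %| d /\ ~~ (e %= d).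
  apply: NNPP => N; apply: NI; split => // e H1 H2.
  apply: NNPP => H3; apply: N; exists e; split => //; split => //; exact/negP.
have dn0 : d != 0 by rewrite -size_poly_gt0; exact: ltnW.
have en0 : e != 0 by apply: contraTneq Hed => ->; rewrite dvd0p.
have Hle := dvdp_leq dn0 Hed.
have Hlt : (size e < size d)%N.
  by rewrite ltn_neqAle Hle andbT; apply: contraNneq Hne => E; rewrite -dvdp_size_eqp // E.
have He : (1 < size e)%N.
  by rewrite ltn_neqAle eq_sym He1 andTb size_poly_gt0.
have [q [Iq Hq]] := IH e (leq_trans Hlt Hs) He.

exists q; split => //; exact: dvdp_trans Hq Hed.
Qed.

Lemma sqfree_dvd (p f : {poly F}) : p != 0 ->
  (forall q, irreducible_poly q -> ~~ (q ^+ 2 %| p)) ->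
  (forall q, irreducible_poly q -> q %| p -> q %| f) -> p %| f.
Proof.
move: {2}(size p) (leqnn (size p)) => k.
elim: k p f => [|k IH] p f Hs pn0 Hsq Hdiv.
  by move: Hs; rewrite leqn0 size_poly_eq0 (negPf pn0).
have [Hp1|Hp1] := leqP (size p) 1.
  apply: dvdUp; rewrite -size_poly_eq1 eqn_leq Hp1 size_poly_gt0; exact: pn0.
have [q [Iq Hq]] := irr_factor Hp1.
have qn0 := irredp_neq0 Iq.
have [p' Ep] := dvdpP _ _ Hq.
have [f' Ef] := dvdpP _ _ (Hdiv q Iq Hq).
have p'n0 : p' != 0 by apply: contraNneq pn0 => E; rewrite Ep E mul0r.
rewrite Ep Ef dvdp_mul2r //.
have Hsq' : forall q', irreducible_poly q' -> ~~ (q' ^+ 2 %| p').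
  move=> q' Iq'; apply: contra (Hsq q' Iq') => H; rewrite Ep; exact: dvdp_mulr.
apply: IH => // [|q' Iq' Hq'].
  rewrite -ltnS; apply: leq_trans Hs; rewrite Ep size_mul //.
  have : (1 < size q)%N := Iq.1.
  case: (size q) => // [[|m]] // _; rewrite addnS /= addnS ltnS; exact: leq_addr.
have : q' %| f' * q by rewrite -Ef; apply: Hdiv => //; rewrite Ep; exact: dvdp_mulr.
case/(irr_prime Iq') => // Hq'q.
have E : q' %= q.
  apply: Iq => //; rewrite neq_ltn; apply/orP; right; exact: Iq'.1.
exfalso; move/negP: (Hsq q Iq); apply; rewrite Ep expr2 dvdp_mul2r //.
by rewrite -(eqp_dvdl _ E).
Qed.
End PolyAux.
Section Cyc.
Variables (F : fieldType) (n' : nat).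
Local Notation n := n'.+1.
Variable mul : 'rV[F]_n -> 'rV[F]_n -> 'rV[F]_n.
Variable a : 'rV[F]_n.
Hypothesis bil : bilinear_mul mul.
Hypothesis leib : left_leibniz mul.
Hypothesis cyc : cyclic_basis mul a.
Implicit Types (f g q : {poly F}).

Definition mulL (x : 'rV[F]_n) : {linear 'rV[F]_n -> 'rV[F]_n} :=
  HB.pack (mul x) (GRing.isLinear.Build _ _ _ _ (mul x) (bil.1 x)).
Definition mulR (y : 'rV[F]_n) : {linear 'rV[F]_n -> 'rV[F]_n} :=
  HB.pack (fun x => mul x y) (GRing.isLinear.Build _ _ _ _ (fun x => mul x y) (bil.2 y)).

Lemma mulrD' x u v : mul x (u + v) = mul x u + mul x v.
Proof. exact: (linearD (mulL x)). Qed.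
Lemma mulr0' x : mul x 0 = 0.
Proof. exact: (linear0 (mulL x)). Qed.
Lemma mulrZ' x k u : mul x (k *: u) = k *: mul x u.
Proof. by rewrite -[k *: u]addr0 (bil.1 x) mulr0' addr0. Qed.
Lemma mullD' y u v : mul (u + v) y = mul u y + mul v y.
Proof. exact: (linearD (mulR y)). Qed.
Lemma mull0' y : mul 0 y = 0.
Proof. exact: (linear0 (mulR y)). Qed.
Lemma mullZ' y k u : mul (k *: u) y = k *: mul u y.
Proof. by rewrite -[k *: u]addr0 (bil.2 y) mull0' addr0. Qed.

Definition L := Lmx mul a.
Definition p := char_poly L.
Definition phi (g : {poly F}) := a *m horner_mx L g.

Lemma mulL_mx v : v *m L = mul a v.
Proof. exact: (mul_rV_lin1 (mulL a) v). Qed.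

Lemma phiD f g : phi (f + g) = phi f + phi g.
Proof. by rewrite /phi rmorphD mulmxDr. Qed.
Lemma phiZ k f : phi (k *: f) = k *: phi f.
Proof. by rewrite /phi linearZ /= -scalemxAr. Qed.
Lemma phi0 : phi 0 = 0.
Proof. by rewrite /phi rmorph0 mulmx0. Qed.
Lemma phi1 : phi 1 = a.
Proof. by rewrite /phi rmorph1 mulmx1. Qed.
Lemma phiC c : phi c%:P = c *: a.
Proof. by rewrite /phi horner_mx_C mul_mx_scalar. Qed.
Lemma phiM f g : phi (f * g) = phi f *m horner_mx L g.
Proof. by rewrite /phi rmorphM mulmxA. Qed.
Lemma phiMX g : phi (g * 'X) = mul a (phi g).
Proof. by rewrite phiM horner_mx_X mulL_mx. Qed.
Lemma phip : phi p = 0.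
Proof. by rewrite /phi /p Cayley_Hamilton mulmx0. Qed.
Lemma phi_sum (I : finType) (G : I -> {poly F}) : phi (\sum_i G i) = \sum_i phi (G i).
Proof. by rewrite /phi raddf_sum mulmx_sumr. Qed.
Lemma phiXn k : phi 'X^k = lpow mul a k.
Proof.
elim: k => [|k IH]; first by rewrite expr0 phi1.
by rewrite exprSr phiMX IH.
Qed.

Lemma phiMp f : phi (f * p) = 0.
Proof. by rewrite phiM /p Cayley_Hamilton mulmx0. Qed.

Definition X : n.-tuple 'rV[F]_n := [tuple lpow mul a i | i < n].
Lemma Xseq : (X : seq _) = mkseq (lpow mul a) n.
Proof. by rewrite /= /mkseq -val_enum_ord -map_comp. Qed.
Lemma Xnth (i : 'I_n) : X`_i = lpow mul a i.
Proof. by rewrite Xseq nth_mkseq. Qed.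
Lemma Xfree : free X.
Proof. rewrite Xseq; exact: (basis_free cyc). Qed.
Lemma Xspan : (<<X>> = fullv)%VS.
Proof. rewrite Xseq; exact: (span_basis cyc). Qed.

Lemma surj x : exists g, x = phi g.
Proof.
have : x \in <<X>>%VS by rewrite Xspan memvf.
move/coord_span => ->.
exists (\sum_i coord X i x *: 'X^i); rewrite phi_sum; apply: eq_bigr => i _.
by rewrite phiZ phiXn Xnth.
Qed.

Lemma phi_small (f : {poly F}) : (size f <= n)%N -> phi f = 0 -> f = 0.
Proof.
move=> Hs H0.
have Ef : f = \sum_(i < n) f`_i *: 'X^i.
  rewrite -poly_def; apply/polyP => i; rewrite coef_poly.
  case: ltnP => // Hi; rewrite nth_default //; exact: leq_trans Hs Hi.
move/freeP: Xfree => /(_ (fun i => f`_i)) H.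
apply/polyP => i; rewrite coef0.
have [Hi|Hi] := ltnP i n; last by rewrite nth_default //; exact: leq_trans Hs Hi.
apply: (H _ (Ordinal Hi)).
rewrite -[RHS]H0 [in RHS]Ef phi_sum; apply: eq_bigr => j _ /=.
by rewrite phiZ phiXn Xnth.
Qed.

Lemma sizep : size p = n.+1.
Proof. exact: size_char_poly. Qed.
Lemma pn0 : p != 0.
Proof. by rewrite -size_poly_gt0 sizep. Qed.

Lemma ker f : phi f = 0 -> p %| f.
Proof.
move=> H; apply/modp_eq0P; apply: phi_small.
  by rewrite -ltnS -sizep ltn_modp pn0.
move: H; rewrite {1}(divp_eq f p) phiD phiMp add0r; done.
Qed.


Lemma annaa z : mul (mul a a) z = 0.
Proof.
have H := leib a a z; apply/(addIr (mul a (mul a z))).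
by rewrite add0r -H.
Qed.

Lemma annL w z : mul (mul a w) z = 0.
Proof.
have [g ->] := surj w; elim/poly_ind: g z => [|g c IH] z.
  by rewrite phi0 mulr0' mull0'.
rewrite phiD phiMX phiC mulrD' mulrZ' mullD' mullZ' annaa scaler0 addr0.
have := leib a (mul a (phi g)) z; rewrite IH mulr0' IH addr0 => <-; done.
Qed.

Lemma mul_phi g z : mul (phi g) z = g`_0 *: mul a z.
Proof.
elim/poly_ind: g => [|g c IH]; first by rewrite phi0 mull0' coef0 scale0r.
rewrite phiD phiMX phiC mullD' mullZ' annL add0r coefD coefMX coefC /=.
by rewrite add0r.
Qed.

Lemma mul_form x z : exists c, mul x z = c *: mul a z.
Proof. have [g ->] := surj x; exists g`_0; exact: mul_phi. Qed.

Lemma an0 : a != 0.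
Proof.
apply/eqP => H; have : p %| 1 by apply: ker; rewrite phi1.
by rewrite dvdp1 sizep.
Qed.

Lemma p0 : p`_0 = 0.
Proof.
case: (eqVneq p`_0 0) => // H.
have Hz : forall z, mul a z = 0.
  move=> z; have : p`_0 *: mul a z = 0 by rewrite -mul_phi phip mull0'.
  by move/eqP; rewrite scaler_eq0 (negPf H) /= => /eqP.
have E : forall g, phi g = g`_0 *: a.
  elim/poly_ind => [|g c IH]; first by rewrite phi0 coef0 scale0r.
  by rewrite phiD phiMX Hz add0r phiC coefD coefMX coefC /= add0r.
move: phip; rewrite E => /eqP; rewrite scaler_eq0 (negPf H) (negPf an0) //.
Qed.

Lemma Xdvdp : 'X %| p.
Proof. by rewrite -['X]subr0 -polyC0 dvdp_XsubCl /root horner_coef0 p0. Qed.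

Lemma Xdvd g : g`_0 = 0 -> 'X %| g.
Proof. by move=> H; rewrite -['X]subr0 -polyC0 dvdp_XsubCl /root horner_coef0 H. Qed.

Lemma Xirr : irreducible_poly ('X : {poly F}).
Proof. by rewrite -['X]subr0 -polyC0; exact: irredp_XsubC. Qed.

Definition invariant (V : {vspace 'rV[F]_n}) := forall v, v \in V -> mul a v \in V.

Lemma inv_subalg V : invariant V -> is_subalgebra mul V.
Proof.
move=> HV x y _ Hy; have [c ->] := mul_form x y; rewrite memvZ //; exact: HV.
Qed.

Lemma ideal V : invariant V -> forall f g, phi f \in V -> phi (g * f) \in V.
Proof.
move=> HV f g Hf; elim/poly_ind: g => [|g c IH]; first by rewrite mul0r phi0 mem0v.
by rewrite mulrDl mulrAC phiD phiMX mul_polyC phiZ memvD // ?memvZ // HV.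
Qed.

Lemma full_of (V : {vspace 'rV[F]_n}) : (forall g, phi g \in V) -> V = fullv.
Proof.
move=> H; apply/eqP; rewrite eqEsubv subvf; apply/subvP => x _.
by have [g ->] := surj x.
Qed.

Definition U (q : {poly F}) : {vspace 'rV[F]_n} :=
  (linfun (mulmxr (horner_mx L q)) @: fullv)%VS.

Lemma memU q f : q %| f -> phi f \in U q.
Proof.
case/dvdpP => g ->; rewrite phiM.
have -> : phi g *m horner_mx L q = linfun (mulmxr (horner_mx L q)) (phi g) by rewrite lfunE.
apply: memv_img; exact: memvf.
Qed.

Lemma memUP q x : x \in U q -> exists g, x = phi (g * q).
Proof.
case/memv_imgP => u _ ->; rewrite lfunE /=; have [g ->] := surj u.
by exists g; rewrite phiM.
Qed.

Lemma U_inv q : invariant (U q).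
Proof.
move=> v /memUP [g ->]; rewrite -phiMX mulrAC; apply: memU; exact: dvdp_mull.
Qed.

Lemma U_proper q : (1 < size q)%N -> q %| p -> U q != fullv.
Proof.
move=> Hs Hqp; apply/eqP => E.
have : a \in U q by rewrite E memvf.
case/memUP => g Hg.
have : p %| 1 - g * q.
  apply: ker; have E2 : phi (1 - g * q) = phi 1 - phi (g * q).
    by rewrite phiD -scaleN1r phiZ scaleN1r.
  by rewrite E2 phi1 -Hg subrr.
move/(dvdp_trans Hqp); rewrite dvdp_subl ?dvdp_mull // dvdp1.
by move=> H; move: Hs; rewrite (eqP H).
Qed.

Lemma inv_of (V : {vspace 'rV[F]_n}) y0 g0 : is_subalgebra mul V ->
  y0 \in V -> y0 = phi g0 -> g0`_0 != 0 -> invariant V.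
Proof.
move=> HV Hy0 E0 Hg0 v Hv; have := HV _ _ Hy0 Hv; rewrite E0 mul_phi => H'.
have -> : mul a v = (g0`_0)^-1 *: (g0`_0 *: mul a v) by rewrite scalerA mulVf // scale1r.
by rewrite memvZ.
Qed.

Lemma U_max q : irreducible_poly q -> q %| p -> is_maximal_subalgebra mul (U q).
Proof.
move=> Iq Hqp; split; first exact: inv_subalg (@U_inv q).
  exact: U_proper Iq.1 Hqp.
move=> V HV HUV HVf; apply/eqP; rewrite eqEsubv HUV andbT; apply/subvP => y Hy.
have [h Eh] := surj y; rewrite Eh; apply: memU.
have HqV : forall g, phi (g * q) \in V.
  by move=> g; apply: (subvP HUV); apply: memU; exact: dvdp_mull.
case: (classic (exists y0 g0, y0 \in V /\ y0 = phi g0 /\ g0`_0 != 0))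
  => [[y0 [g0 [Hy0 [E0 Hg0]]]] | N].
  have Hinv := inv_of HV Hy0 E0 Hg0.
  have [Hg|Hg] := eqVneq (size (gcdp q h)) 1%N.
    have : coprimep q h by rewrite /coprimep Hg.
    case/Bezout_eq1_coprimepP => u Hu.
    have Ha : phi 1 \in V by rewrite -Hu phiD memvD // ?HqV // ideal // -Eh.
    exfalso; move/negP: HVf; apply; apply/eqP; apply: full_of => g.
    by rewrite -(mulr1 g) ideal.
  have E := Iq _ Hg (dvdp_gcdl q h).
  by rewrite -(eqp_dvdl _ E) dvdp_gcdr.
have N0 : forall y0 g0, y0 \in V -> y0 = phi g0 -> g0`_0 = 0.
  move=> y0 g0 H1 H2; apply/eqP; apply: NNPP => H3; apply: N.
  by exists y0, g0; split => //; split => //; exact/negP.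
have Hq0 : q`_0 = 0 by apply: (N0 _ q (HqV 1)); rewrite mul1r.
have EX : 'X %= q by apply: Iq; [rewrite size_polyX | exact: Xdvd].
rewrite -(eqp_dvdl _ EX); apply: Xdvd; exact: N0 Hy Eh.
Qed.

Lemma max_shape M : is_maximal_subalgebra mul M ->
  exists q, [/\ irreducible_poly q, q %| p & U q = M].
Proof.
case=> HM HMf Hmax.
suff [q [Iq Hqp HMq]] : exists q, [/\ irreducible_poly q, q %| p & (M <= U q)%VS].
  exists q; split => //; apply: Hmax => //.
  - exact: inv_subalg (@U_inv q).
  - exact: U_proper Iq.1 Hqp.
case: (classic (exists y0 g0, y0 \in M /\ y0 = phi g0 /\ g0`_0 != 0))
  => [[y0 [g0 [Hy0 [E0 Hg0]]]] | N].
  have Hinv := inv_of HM Hy0 E0 Hg0.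
  have [d [[dn0 Hd] Hmin]] := @minsize F (fun d => d != 0 /\ phi d \in M) p
     (conj pn0 (eq_ind_r (fun x => x \in M) (mem0v M) phip)).
  have Hdiv : forall f, phi f \in M -> d %| f.
    move=> f Hf; apply/modp_eq0P; apply: NNPP => Hr.
    have Hr' : phi (f %% d) \in M.
      have E2 : phi (f %% d) = phi f - phi (f %/ d * d).
        by rewrite {2}(divp_eq f d) phiD addrC addKr.
      by rewrite E2 memvB // ideal.
    have := Hmin _ (conj (introN eqP Hr) Hr').
    by rewrite leqNgt ltn_modp dn0.
  have Hs : (1 < size d)%N.
    rewrite ltn_neqAle size_poly_gt0 dn0 andbT eq_sym; apply/eqP => H1.
    move/negP: HMf; apply; apply/eqP; apply: full_of => g.
    have : d %| g by apply: dvdUp; rewrite -size_poly_eq1 H1.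
    by case/dvdpP => g' ->; rewrite ideal.
  have [q [Iq Hqd]] := irr_factor Hs.
  exists q; split => //.
    apply: dvdp_trans Hqd _; apply: Hdiv; rewrite phip; exact: mem0v.
  apply/subvP => y Hy; have [g Eg] := surj y; rewrite Eg; apply: memU.
  apply: dvdp_trans Hqd _; apply: Hdiv; by rewrite -Eg.
have N0 : forall y0 g0, y0 \in M -> y0 = phi g0 -> g0`_0 = 0.
  move=> y0 g0 H1 H2; apply/eqP; apply: NNPP => H3; apply: N.
  by exists y0, g0; split => //; split => //; exact/negP.
exists 'X; split; [exact: Xirr | exact: Xdvdp |].
apply/subvP => y Hy; have [g Eg] := surj y; rewrite Eg; apply: memU.
apply: Xdvd; exact: N0 Hy Eg.
Qed.
End Cyc.

Unset Implicit Arguments.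
Theorem mainTheorem8 (F : fieldType) (n : nat)
    (mul : 'rV[F]_n -> 'rV[F]_n -> 'rV[F]_n) (a : 'rV[F]_n) :
  (0 < n)%N ->
  bilinear_mul mul -> left_leibniz mul -> cyclic_basis mul a ->
  frattini_trivial mul <->
  (forall q : {poly F}, irreducible_poly q ->
     ~~ (q ^+ 2 %| char_poly (Lmx mul a))%R).
Proof.
case: n mul a => [|n'] mul a H0 bil leib cyc; first by [].
change (char_poly (Lmx mul a)) with (p mul a).
have Hsurj := surj bil cyc.
have Hker := ker bil cyc.
split.
- move=> Htriv q Iq; apply/negP => Hq2.
  have qn0 := irredp_neq0 Iq.
  have Hqp : q %| p mul a by apply: dvdp_trans Hq2; rewrite expr2 dvdp_mulr.
  set r := p mul a %/ q.
  have Er : p mul a = r * q by rewrite divpK.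
  have rn0 : r != 0 by apply: contraNneq (pn0 mul a) => E; rewrite Er E mul0r.
  have Hr : forall q', irreducible_poly q' -> q' %| p mul a -> q' %| r.
    move=> q' Iq' Hq'; move: Hq'; rewrite Er => /(irr_prime Iq') [//|Hq'q].
    have E : q' %= q.
      apply: Iq => //; rewrite neq_ltn; apply/orP; right; exact: Iq'.1.
    rewrite (eqp_dvdl _ E) -(dvdp_mul2r _ _ qn0) -Er -expr2 //.
  have Hphi : phi mul a r = 0.
    apply: Htriv => M HM; have [q' [Iq' Hq'p <-]] := max_shape bil leib cyc HM.
    apply: memU; exact: Hr.
  have := dvdp_leq rn0 (Hker _ Hphi).
  rewrite Er size_mul //; have : (1 < size q)%N := Iq.1.
  case: (size q) => // [[|m]] // _; rewrite addnS /= addnS ltnNge leq_addr //.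
- move=> Hsq x Hx; have [f Ef] := Hsurj x; rewrite Ef.
  have Hd : p mul a %| f.
    apply: sqfree_dvd (pn0 mul a) Hsq _ => q Iq Hqp.
    have := Hx _ (U_max bil leib cyc Iq Hqp); case/(memUP bil cyc) => g Hg.
    have : p mul a %| f - g * q.
      apply: Hker; rewrite phiD -scaleN1r phiZ scaleN1r -Hg Ef subrr //.
    move/(dvdp_trans Hqp); rewrite dvdp_subl // dvdp_mull //.
  by case/dvdpP: Hd => g ->; rewrite phiMp.
Qed.
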